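(* Let $a\ge b\ge1$ be integers and define $c_j,d_j$ ($j\in\mathbb Z_+$) by $c_0=d_0=0$, $c_1=d_1=1$, $c_{k+2}+c_k=a d_{k+1}$, $d_{k+2}+d_k=b c_{k+1}$. Then the inequalities $$bc_k^2+ad_{k+1}^2-abc_kd_{k+1}+abc_k-2ad_{k+1}+a\le0$$ and $$bc_{k+1}^2+ad_k^2-abd_kc_{k+1}-2bc_{k+1}+abd_k+b\le0$$ hold (1) for all $k\ge1$ if $b\ge2$, and (2) for all $k\ge2$ if $b=1$ and $a\ge5$.
   Context: $\mathbb Z_+=\{0,1,2,\dots\}$. *)

(* Defs.v *)
From Stdlib Require Import ZArith.
Open Scope Z_scope.

(* cd a b n = (c_n, c_{n+1}, d_n, d_{n+1}) with
   c_0=d_0=0, c_1=d_1=1, c_{k+2} = a d_{k+1} - c_k, d_{k+2} = b c_{k+1} - d_k. *)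
Fixpoint cd (a b : Z) (n : nat) : Z * Z * Z * Z :=
  match n with
  | O => (0, 1, 0, 1)
  | S m => let '(c0, c1, d0, d1) := cd a b m in
           (c1, a * d1 - c0, d1, b * c1 - d0)
  end.

Definition c (a b : Z) (n : nat) : Z := let '(x, _, _, _) := cd a b n in x.
Definition d (a b : Z) (n : nat) : Z := let '(_, _, x, _) := cd a b n in x.

(* Main.v *)
Require Import Defs.
From Stdlib Require Import ZArith Lia Arith.
Open Scope Z_scope.

Definition nxt (a b : Z) (s : Z * Z * Z * Z) : Z * Z * Z * Z :=
  let '(x, y, u, v) := s in (y, a * v - x, v, b * y - u).

Lemma cd_S a b k : cd a b (S k) = nxt a b (cd a b k).
Proof. simpl. destruct (cd a b k) as [[[x y] u] v]. reflexivity. Qed.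

Lemma cd_eq a b k : cd a b k = (c a b k, c a b (S k), d a b k, d a b (S k)).
Proof.
  unfold c, d. rewrite cd_S. destruct (cd a b k) as [[[x y] u] v]. reflexivity.
Qed.

Definition Q (a b x y : Z) := b * x ^ 2 + a * y ^ 2 - a * b * x * y.

Definition G (a b : Z) (s : Z * Z * Z * Z) : Prop :=
  let '(x, y, u, v) := s in
  let p := 2 * y - a * u in let q := 2 * v - b * x in
  0 <= p /\ 0 <= q /\ 2 * p <= a * (b * y - 2 * u) /\ 2 * q <= b * (a * v - 2 * x).

Definition QS (a b al be : Z) (s : Z * Z * Z * Z) : Prop :=
  let '(x, y, u, v) := s in Q a b x v = al /\ Q a b y u = be.

Definition LE (a b : Z) (s : Z * Z * Z * Z) : Prop :=
  let '(x, y, u, v) := s in 2 <= 2 * y - a * u /\ 2 <= 2 * v - b * x.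

Definition LO (a b : Z) (s : Z * Z * Z * Z) : Prop :=
  let '(x, y, u, v) := s in a + b <= b * (2 * y - a * u) /\ a + b <= a * (2 * v - b * x).

Section S.
Variables a b : Z.
Hypothesis hab : a >= b.
Hypothesis hb : b >= 1.
Hypothesis hab4 : 4 <= a * b.

Lemma G_step s : G a b s -> G a b (nxt a b s).
Proof.
  destruct s as [[[x y] u] v]; unfold G, nxt.
  intros [H1 [H2 [H3 H4]]].
  set (p1 := a * v - 2 * x) in *.
  set (q1 := b * y - 2 * u) in *.
  assert (Hp1 : 0 <= p1) by nia.
  assert (Hq1 : 0 <= q1) by nia.
  pose proof hab4 as Hab4.
  split; [|split; [|split]].
  - unfold p1 in Hp1; nia.
  - unfold q1 in Hq1; nia.
  - assert (E : b * (a * v - x) - 2 * v = b * p1 - (2 * v - b * x)) by (unfold p1; ring).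
    rewrite E.
    assert (0 <= a * (b * p1 - 2 * (2 * v - b * x))) by (apply Z.mul_nonneg_nonneg; lia).
    assert (0 <= (a * b - 4) * p1) by (apply Z.mul_nonneg_nonneg; lia).
    unfold p1 in *; nia.
  - assert (E : a * (b * y - u) - 2 * y = a * q1 - (2 * y - a * u)) by (unfold q1; ring).
    rewrite E.
    assert (0 <= b * (a * q1 - 2 * (2 * y - a * u))) by (apply Z.mul_nonneg_nonneg; lia).
    assert (0 <= (a * b - 4) * q1) by (apply Z.mul_nonneg_nonneg; lia).
    unfold q1 in *; nia.
Qed.

Lemma G_all k : G a b (cd a b k).
Proof.
  induction k.
  - unfold cd, G. nia.
  - rewrite cd_S. apply G_step; auto.
Qed.

Lemma QS_step al be s : QS a b al be s -> QS a b be al (nxt a b s).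
Proof.
  destruct s as [[[x y] u] v]; unfold QS, nxt, Q. intros [H1 H2].
  split; [rewrite <- H2 | rewrite <- H1]; ring.
Qed.

Lemma QS_all n : QS a b a b (cd a b (2 * n)) /\ QS a b b a (cd a b (S (2 * n))).
Proof.
  induction n.
  - simpl. unfold Q. split; split; ring.
  - replace (2 * S n)%nat with (S (S (2 * n))) by lia.
    destruct IHn as [_ H].
    rewrite cd_S. split. apply QS_step; auto.
    rewrite cd_S. apply QS_step, QS_step; auto.
Qed.

Lemma mono s : G a b s -> G a b (nxt a b s) ->
  let '(x, y, u, v) := s in
  let '(x', y', u', v') := nxt a b (nxt a b s) in
  2 * y - a * u <= 2 * y' - a * u' /\ 2 * v - b * x <= 2 * v' - b * x'.
Proof.
  destruct s as [[[x y] u] v]; unfold G, nxt.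
  intros [H1 [H2 [H3 H4]]] [K1 [K2 [K3 K4]]].
  split; nia.
Qed.

Lemma LE_step s : G a b s -> G a b (nxt a b s) -> LE a b s -> LE a b (nxt a b (nxt a b s)).
Proof.
  intros g1 g2 L. pose proof (mono s g1 g2) as M.
  destruct s as [[[x y] u] v]. unfold LE in *.
  destruct (nxt a b (nxt a b (x, y, u, v))) as [[[x' y'] u'] v']. lia.
Qed.

Lemma LO_step s : G a b s -> G a b (nxt a b s) -> LO a b s -> LO a b (nxt a b (nxt a b s)).
Proof.
  intros g1 g2 L. pose proof (mono s g1 g2) as M.
  destruct s as [[[x y] u] v]. unfold LO in *.
  destruct (nxt a b (nxt a b (x, y, u, v))) as [[[x' y'] u'] v']. nia.
Qed.

Lemma LE_all n : LE a b (cd a b (2 * n)).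
Proof.
  induction n.
  - change (2 * 0)%nat with 0%nat. cbv [cd LE]. lia.
  - replace (2 * S n)%nat with (S (S (2 * n))) by lia.
    rewrite !cd_S. apply LE_step; auto. apply G_all. rewrite <- cd_S. apply G_all.
Qed.

Lemma LO_from m : LO a b (cd a b m) -> forall n, LO a b (cd a b (m + 2 * n)).
Proof.
  intros H0 n. induction n.
  - rewrite Nat.add_0_r; auto.
  - replace (m + 2 * S n)%nat with (S (S (m + 2 * n))) by lia.
    rewrite !cd_S. apply LO_step; auto. apply G_all. rewrite <- cd_S. apply G_all.
Qed.

Definition PP k := b * c a b k ^ 2 + a * d a b (k + 1)%nat ^ 2 - a * b * c a b k * d a b (k + 1)%nat
             + a * b * c a b k - 2 * a * d a b (k + 1)%nat + a <= 0
          /\ b * c a b (k + 1)%nat ^ 2 + a * d a b k ^ 2 - a * b * d a b k * c a b (k + 1)%nat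
             - 2 * b * c a b (k + 1)%nat + a * b * d a b k + b <= 0.

Lemma Heven n : PP (2 * n)%nat.
Proof.
  pose proof (LE_all n) as L. destruct (QS_all n) as [Qs _].
  rewrite cd_eq in L, Qs. unfold LE, QS, Q in *. unfold PP.
  rewrite Nat.add_1_r. destruct Qs as [Q1 Q2]. destruct L as [L1 L2].
  assert (0 <= a * ((2 * d a b (S (2 * n)) - b * c a b (2 * n)) - 2)) by (apply Z.mul_nonneg_nonneg; lia).
  assert (0 <= b * ((2 * c a b (S (2 * n)) - a * d a b (2 * n)) - 2)) by (apply Z.mul_nonneg_nonneg; lia).
  split; lia.
Qed.

Lemma Hodd2 n : LO a b (cd a b (S (2 * n))) -> PP (S (2 * n)).
Proof.
  intros L. destruct (QS_all n) as [_ Qs].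
  rewrite cd_eq in L, Qs. unfold LO, QS, Q in *. unfold PP.
  rewrite Nat.add_1_r. destruct Qs as [Q1 Q2]. destruct L as [L1 L2].
  
  split; lia.
Qed.

End S.

Theorem lemma3p5 (a b : Z) :
  a >= b -> b >= 1 ->
  let C := c a b in let D := d a b in
  let P k := b * C k ^ 2 + a * D (k + 1)%nat ^ 2 - a * b * C k * D (k + 1)%nat
             + a * b * C k - 2 * a * D (k + 1)%nat + a <= 0
          /\ b * C (k + 1)%nat ^ 2 + a * D k ^ 2 - a * b * D k * C (k + 1)%nat
             - 2 * b * C (k + 1)%nat + a * b * D k + b <= 0 in
  (b >= 2 -> forall k : nat, (1 <= k)%nat -> P k) /\
  (b = 1 -> a >= 5 -> forall k : nat, (2 <= k)%nat -> P k).
Proof.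
  intros hab hb C D P.
  split.
  - intros hb2 k hk. assert (hab4 : 4 <= a * b) by nia.
    change (PP a b k). destruct (Nat.Even_or_Odd k) as [[n ->]|[n ->]].
    + apply Heven; auto.
    + rewrite Nat.add_1_r. apply Hodd2; auto.
      pose proof (LO_from a b hab hb hab4 1 ltac:(cbv [cd LO]; nia) n) as H.
      replace (1 + 2 * n)%nat with (S (2 * n)) in H by lia. exact H.
  - intros hb1 ha5 k hk. assert (hab4 : 4 <= a * b) by nia.
    change (PP a b k). destruct (Nat.Even_or_Odd k) as [[n ->]|[n ->]].
    + apply Heven; auto.
    + rewrite Nat.add_1_r. apply Hodd2; auto.
      destruct n as [|n]; [lia|].
      pose proof (LO_from a b hab hb hab4 3 ltac:(subst b; cbv [cd LO]; nia) n) as H.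
      replace (3 + 2 * n)%nat with (S (2 * S n)) in H by lia. exact H.
Qed.
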